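(* Let $\tilde{\mathcal{A}}(R,\boldsymbol{\sigma},\boldsymbol{t})$ be a twisted generalized Weyl construction with $t_1,\dots,t_n$ regular in $R$ and satisfying the consistency equations, and let $\mathcal{A}(R,\boldsymbol{\sigma},\boldsymbol{t})$ be the corresponding twisted generalized Weyl algebra. If $\mathcal{B}$ is a $\Bbbk$-algebra and $\tilde{\varphi}:\tilde{\mathcal{A}}(R,\boldsymbol{\sigma},\boldsymbol{t})\to\mathcal{B}$ is a $\Bbbk$-algebra homomorphism such that $\tilde\varphi(r)$ is regular (not a zero-divisor) in $\mathcal{B}$ for every regular element $r$ of $R$, then $\tilde\varphi$ induces a $\Bbbk$-algebra homomorphism $\varphi:\mathcal{A}(R,\boldsymbol{\sigma},\boldsymbol{t})\to\mathcal{B}$.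
   Context: Let $\Bbbk$ be a field, $R$ a unital associative $\Bbbk$-algebra, $\sigma_1^{1/2},\dots,\sigma_n^{1/2}$ pairwise commuting automorphisms of $R$ ($\sigma_i=(\sigma_i^{1/2})^2$), $t_1,\dots,t_n\in Z(R)$. The TGWC $\tilde{\mathcal{A}}(R,\boldsymbol{\sigma},\boldsymbol{t})$ is obtained from $R$ by adjoining $X_1^\pm,\dots,X_n^\pm$ with relations $X_i^\pm r=\sigma_i^{\pm1}(r)X_i^\pm$, $X_i^\pm X_i^\mp=\sigma_i^{\pm1/2}(t_i)$, $[X_i^\pm,X_j^\mp]=0$ ($i\ne j$); it is $\mathbb{Z}^n$-graded by $\deg r=0$, $\deg X_i^\pm=\pm\mathbf{e}_i$. The TGWA $\mathcal{A}(R,\boldsymbol{\sigma},\boldsymbol{t})$ is $\tilde{\mathcal{A}}/\mathcal{I}$, where $\mathcal{I}$ is the sum of all graded ideals of $\tilde{\mathcal{A}}$ intersecting the degree-zero part trivially. Consistency equations: $\sigma_j^{1/2}(t_i)\sigma_i^{1/2}(t_j)=\sigma_j^{-1/2}(t_i)\sigma_i^{-1/2}(t_j)$ for $i\ne j$, and $\sigma_i^{1/2}\sigma_j^{1/2}(t_k)\sigma_i^{-1/2}\sigma_j^{-1/2}(t_k)=\sigma_i^{1/2}\sigma_j^{-1/2}(t_k)\sigma_i^{-1/2}\sigma_j^{1/2}(t_k)$ for pairwise distinct $i,j,k$; under these, $R$ is identified with the degree-zero parts of $\tilde{\mathcal{A}}$ and $\mathcal{A}$. *)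

(* Defs.v *)
From HB Require Import structures.
From mathcomp Require Import all_boot all_order all_algebra.
Set Implicit Arguments. Unset Strict Implicit. Unset Printing Implicit Defensive.
Import Order.TTheory GRing.Theory Num.Theory.
Local Open Scope ring_scope.

(* Twisted generalized Weyl constructions/algebras.
   sh i  = sigma_i^{1/2},  shi i = sigma_i^{-1/2}  (its inverse). *)

Section TGW.
Variables (k : fieldType) (n : nat) (R : algType k).
Variables (sh shi : 'I_n -> R -> R) (t : 'I_n -> R).

Definition sigma_p (i : 'I_n) (r : R) : R := sh i (sh i r).
Definition sigma_m (i : 'I_n) (r : R) : R := shi i (shi i r).

Definition regular (C : pzRingType) (c : C) : Prop :=
  (forall x : C, c * x = 0 -> x = 0) /\ (forall x : C, x * c = 0 -> x = 0).

(* the defining relations of the TGWC, for an image psi of R and images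
   Yp i, Ym i of X_i^+, X_i^- in an algebra C *)
Definition TGWC_rel (C : algType k) (psi : R -> C) (Yp Ym : 'I_n -> C) : Prop :=
  [/\ forall i r, Yp i * psi r = psi (sigma_p i r) * Yp i,
      forall i r, Ym i * psi r = psi (sigma_m i r) * Ym i,
      forall i, Yp i * Ym i = psi (sh i (t i)),
      forall i, Ym i * Yp i = psi (shi i (t i)) &
      forall i j, i != j -> Yp i * Ym j = Ym j * Yp i].

Definition consistency : Prop :=
  (forall i j, i != j ->
     sh j (t i) * sh i (t j) = shi j (t i) * shi i (t j)) /\
  (forall i j l, i != j -> j != l -> i != l ->
     sh i (sh j (t l)) * shi i (shi j (t l)) =
     sh i (shi j (t l)) * shi i (sh j (t l))).

(* (A, iota, Xp, Xm) is the TGWC  A~(R, sigma, t): the k-algebra generated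
   by R and X_i^{+-} subject to the relations, given by its universal property *)
Definition is_TGWC (A : algType k) (iota : {lrmorphism R -> A})
    (Xp Xm : 'I_n -> A) : Prop :=
  TGWC_rel iota Xp Xm /\
  forall (B : algType k) (psi : {lrmorphism R -> B}) (Yp Ym : 'I_n -> B),
    TGWC_rel psi Yp Ym ->
    exists f : {lrmorphism A -> B},
      ((forall r, f (iota r) = psi r) /\
       (forall i, f (Xp i) = Yp i) /\ (forall i, f (Xm i) = Ym i)) /\
      (forall g : {lrmorphism A -> B},
         (forall r, g (iota r) = psi r) ->
         (forall i, g (Xp i) = Yp i) -> (forall i, g (Xm i) = Ym i) ->
         forall a, g a = f a).

(* words in the letters X_i^+ (true) and X_i^- (false) *)
Definition word := seq ('I_n * bool).

Definition word_deg (w : word) : {ffun 'I_n -> int} :=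
  [ffun j => \sum_(x <- w) (if x.1 == j then (if x.2 then 1 else -1) else 0)].

Definition deg0 : {ffun 'I_n -> int} := [ffun => 0].

Section Grading.
Variables (A : algType k) (iota : R -> A) (Xp Xm : 'I_n -> A).

Definition word_val (w : word) : A :=
  \prod_(x <- w) (if x.2 then Xp x.1 else Xm x.1).

Definition in_deg (g : {ffun 'I_n -> int}) (a : A) : Prop :=
  exists s : seq (R * word),
    (forall p, p \in s -> word_deg p.2 = g) /\
    a = \sum_(p <- s) iota p.1 * word_val p.2.

Definition two_sided_ideal (I : A -> Prop) : Prop :=
  [/\ I 0, forall a b, I a -> I b -> I (a + b), forall a, I a -> I (- a),
      forall a b, I b -> I (a * b) & forall a b, I a -> I (a * b)].

Definition graded_ideal (I : A -> Prop) : Prop :=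
  two_sided_ideal I /\
  forall a, I a -> exists s : seq ({ffun 'I_n -> int} * A),
    (forall p, p \in s -> I p.2 /\ in_deg p.1 p.2) /\ a = \sum_(p <- s) p.2.

Definition admissible_ideal (I : A -> Prop) : Prop :=
  graded_ideal I /\ forall a, I a -> in_deg deg0 a -> a = 0.

(* the ideal  I = sum of all such ideals; TGWA = A / I *)
Definition TGWA_ideal (a : A) : Prop :=
  exists s : seq A,
    (forall b, b \in s -> exists I, admissible_ideal I /\ I b) /\
    a = \sum_(b <- s) b.

End Grading.
End TGW.

(* Main.v *)
Require Import Defs.
From HB Require Import structures.
From mathcomp Require Import all_boot all_order all_algebra.
Import GRing.Theory.
Local Open Scope ring_scope.

Lemma reg_mul (C : pzRingType) (a b : C) : regular a -> regular b -> regular (a * b).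
Proof.
move=> [a1 a2] [b1 b2]; split=> x.
- by rewrite -mulrA => /a1 /b1.
- by rewrite mulrA => /b2 /a2.
Qed.

Lemma reg_aut (k : fieldType) (R : algType k) (f g : {lrmorphism R -> R})
  (fg : cancel f g) (gf : cancel g f) (r : R) : regular r -> regular (f r).
Proof.
move=> [r1 r2]; split=> x H.
- have E : g (f r * x) = r * g x by rewrite (rmorphM g); congr (_ * _); exact: fg.
  have : r * g x = 0 by rewrite -E H raddf0.
  move=> /r1 Hx; by rewrite -[x]gf Hx raddf0.
- have E : g (x * f r) = g x * r by rewrite (rmorphM g); congr (_ * _); exact: fg.
  have : g x * r = 0 by rewrite -E H raddf0.
  move=> /r2 Hx; by rewrite -[x]gf Hx raddf0.
Qed.

Arguments reg_aut {k R f g}.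
Arguments reg_mul {C a b}.

Theorem mainTheorem6 (k : fieldType) (n : nat) (R : algType k)
  (sh shi : 'I_n -> {lrmorphism R -> R}) (t : 'I_n -> R)
  (sh_shi : forall i, cancel (sh i) (shi i))
  (shi_sh : forall i, cancel (shi i) (sh i))
  (sh_comm : forall i j r, sh i (sh j r) = sh j (sh i r))
  (t_central : forall i r, t i * r = r * t i)
  (t_reg : forall i, regular (t i))
  (hcons : consistency sh shi t)
  (A : algType k) (iota : {lrmorphism R -> A}) (Xp Xm : 'I_n -> A)
  (hA : is_TGWC sh shi t iota Xp Xm)
  (B : algType k) (phi : {lrmorphism A -> B})
  (phi_reg : forall r : R, regular r -> regular (phi (iota r))) :
  forall a : A, TGWA_ideal iota Xp Xm a -> phi a = 0.
Proof.
have [[relp relm relpm relmp _] _] := hA.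
have reg1 : regular (1 : R) by split=> x; rewrite ?mul1r ?mulr1.
pose lv (x : 'I_n * bool) := if x.2 then Xp x.1 else Xm x.1.
pose sig (x : 'I_n * bool) r :=
  if x.2 then sigma_p (fun i => sh i) x.1 r else sigma_m (fun i => shi i) x.1 r.
pose fl (x : 'I_n * bool) := (x.1, ~~ x.2).
pose dual (w : word n) := rev (map fl w).
pose WV := word_val Xp Xm.
have WVcons x w : WV (x :: w) = lv x * WV w by rewrite /WV /word_val big_cons.
have WVrcons x w : WV (rcons w x) = WV w * lv x by rewrite /WV /word_val big_rcons.
have WVcat u w : WV (u ++ w) = WV u * WV w by rewrite /WV /word_val big_cat.
have lvcomm x r : lv x * iota r = iota (sig x r) * lv x.
  by rewrite /lv /sig; case: x.2.
have sigreg x r : regular r -> regular (sig x r).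
  rewrite /sig /sigma_p /sigma_m; case: x.2 => /= Hr.
  - by do 2 apply: (reg_aut (sh_shi _) (shi_sh _)).
  - by do 2 apply: (reg_aut (shi_sh _) (sh_shi _)).
have flx x : exists s, regular s /\ lv (fl x) * lv x = iota s.
  rewrite /lv /fl /=; case: x.2 => /=.
  - exists (shi x.1 (t x.1)); split=> //.
    exact: (reg_aut (shi_sh _) (sh_shi _)).
  - exists (sh x.1 (t x.1)); split=> //.
    exact: (reg_aut (sh_shi _) (shi_sh _)).
have dualreg : forall w (r : R), regular r -> exists r', regular r' /\
    WV (dual w) * iota r * WV w = iota r'.
  elim=> [|x w IH] r Hr.
    by exists r; rewrite /WV /word_val !big_nil mul1r mulr1.
  have [s [Hs Es]] := flx x.
  have [r' [Hr' E]] := IH (sig (fl x) r * s) (reg_mul (sigreg _ _ Hr) Hs).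
  exists r'; split=> //.
  rewrite /dual map_cons rev_cons WVrcons WVcons -/(dual w).
  rewrite -(mulrA _ (lv _)) lvcomm !mulrA -(mulrA _ (lv (fl x)) (lv x)) Es -E.
  by rewrite (rmorphM iota) !mulrA.
pose sigw (w : word n) r := foldr sig r w.
have wcomm : forall w r, WV w * iota r = iota (sigw w r) * WV w.
  elim=> [|x w IH] r; first by rewrite /WV /word_val big_nil mul1r mulr1.
  by rewrite WVcons -mulrA IH mulrA lvcomm -mulrA.
have degd : forall u v : word n, word_deg u = word_deg v ->
    word_deg (dual u ++ v) = deg0 n.
  move=> u v Huv; apply/ffunP=> j; rewrite /deg0 !ffunE /dual big_cat /=.
  rewrite big_rev big_map /=.
  move/ffunP/(_ j): Huv; rewrite !ffunE => <-.
  rewrite -big_split /=; apply: big1 => x _.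
  by case: (x.1 == j) => //; case: x.2; rewrite ?addr0 // ?addNr ?addrN.
have key : forall I g c, admissible_ideal iota Xp Xm I -> I c ->
    in_deg iota Xp Xm g c -> phi c = 0.
  move=> I g c [[[I0 ID IN IL IR] _] Iz] Ic [s [Hs Ec]].
  case: s Hs Ec => [|p0 s] Hs Ec; first by rewrite Ec big_nil raddf0.
  set u := dual p0.2.
  have Huc : WV u * c = 0.
    apply: Iz; first exact: IL.
    exists [seq (sigw u p.1, u ++ p.2) | p <- p0 :: s]; split.
      move=> q /mapP [p Hp ->] /=; apply: degd.
      by rewrite (Hs _ Hp) (Hs p0) // mem_head.
    rewrite Ec big_map mulr_sumr; apply: eq_bigr => p _ /=.
    by rewrite -/WV WVcat mulrA wcomm mulrA.
  have [r [Hr Er]] := dualreg u 1 reg1.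
  have Erc : iota r * c = 0.
    by rewrite -Er (rmorph1 iota) mulr1 -mulrA Huc mulr0.
  have := congr1 phi Erc; rewrite (rmorphM phi) raddf0.
  by case: (phi_reg r Hr) => H1 _ /H1.
move=> a [s [Hs ->]]; rewrite raddf_sum big1_seq // => b /andP [_ /Hs [I [HI Ib]]].
have [[_ Hg] _] := HI.
have [s' [Hs' ->]] := Hg b Ib.
rewrite raddf_sum big1_seq // => p /andP [_ /Hs' [Ip Dp]].
exact: (key I p.1 p.2 HI Ip Dp).
Qed.
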